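(* Let $V$ be a finite set with $n=|V|\ge 3$, and let $x=(V,E_x)$ and $y=(V,E_y)$ be two undirected Hamiltonian cycles on $V$. Let $E=E_x\uplus E_y$ be the edge multiset of the 4-regular multigraph $x\cup y$ (an edge lying in both cycles appears as two distinct parallel copies, one from $E_x$ and one from $E_y$); let $c=|E_x\cap E_y|$ be the number of edges common to both cycles, and let $E_x\setminus E_y$ (resp. $E_y\setminus E_x$) denote the copies coming from $x$ (resp. $y$) of edges that do not belong to the other cycle. For $v\in V$ let $E_v\subseteq E$ be the set of edge copies incident to $v$, and for $S\subseteq V$ let $E_S\subseteq E$ be the set of edge copies with both endpoints in $S$. Consider a vector $(x_e)_{e\in E}$ satisfying (1) $\sum_{e\in E}x_e=n$; (2) $\sum_{e\in E_v}x_e=2$ for all $v\in V$; (3) $\sum_{e\in E_x\setminus E_y}x_e\le n-c-2$; (4) $\sum_{e\in E_y\setminus E_x}x_e\le n-c-2$; (5) $\sum_{e\in E_S}x_e\le |S|-1$ for every $S\subsetneq V$ with $|S|\ge 2$; (6) $\sum_{e\in E_S}x_e\ge |E_S|-|S|+1$ for every $S\subsetneq V$ with $|S|\ge 2$; (7) $x_e\in\{0,1\}$ for all $e\in E$. Then a vector $(x_e)_{e\in E}\in\{0,1\}^E$ satisfies (1)–(7) if and only if, setting $z=\{e\in E: x_e=1\}$ and $w=\{e\in E:x_e=0\}$, both $z$ and $w$ are (edge sets of) Hamiltonian cycles on $V$ and the Hamiltonian cycle $z$ is different from both $x$ and $y$ (equivalently, $\{z,w\}$ is a Hamiltonian decomposition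 of $x\cup y$ into two edge-disjoint Hamiltonian cycles different from $x$ and $y$).
   Context: A Hamiltonian decomposition of a regular multigraph is a partition of its edge (multi)set into Hamiltonian cycles. For Hamiltonian cycles $x=(V,E_x)$, $y=(V,E_y)$ on the same vertex set, $x\cup y$ denotes the multigraph $(V,E_x\uplus E_y)$ containing all edges of both cycles (common edges with multiplicity 2). Two Hamiltonian cycles are considered equal if they have the same underlying edge set on $V$. *)

(* Defs.v *)
From mathcomp Require Import all_boot all_order all_algebra.
Set Implicit Arguments. Unset Strict Implicit. Unset Printing Implicit Defensive.
Import Order.TTheory GRing.Theory Num.Theory.

(* Undirected edges on V are 2-element subsets {u,v} : {set V}. *)
Definition is_ham_cycle (V : finType) (H : {set {set V}}) : Prop :=
  exists s : seq V,
    [/\ uniq s, (forall v : V, v \in s) & H = [set [set v; next s v] | v : V]].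

(* An edge copy of the multigraph x ∪ y is a pair (b, e): b = true means
   the copy coming from x (e ∈ Ex), b = false the copy coming from y (e ∈ Ey). *)
Definition copy (V : finType) := (bool * {set V})%type.

Definition copies (V : finType) (Ex Ey : {set {set V}}) : {set copy V} :=
  [set p : copy V | p.2 \in (if p.1 then Ex else Ey)].

Definition copies_at (V : finType) (Ex Ey : {set {set V}}) (v : V)
  : {set copy V} := [set p in copies Ex Ey | v \in p.2].

Definition copies_in (V : finType) (Ex Ey : {set {set V}}) (S : {set V})
  : {set copy V} := [set p in copies Ex Ey | p.2 \subset S].

Definition copies_x_only (V : finType) (Ex Ey : {set {set V}}) : {set copy V} :=
  [set p in copies Ex Ey | p.1 && (p.2 \notin Ey)].
Definition copies_y_only (V : finType) (Ex Ey : {set {set V}}) : {set copy V} :=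
  [set p in copies Ex Ey | ~~ p.1 && (p.2 \notin Ex)].

Definition underlying (V : finType) (Z : {set copy V}) : {set {set V}} :=
  [set p.2 | p in Z].

Definition ham_copies (V : finType) (Z : {set copy V}) : Prop :=
  {in Z &, injective (fun p : copy V => p.2)} /\ is_ham_cycle (underlying Z).

(* Main.v *)
Require Import Defs.
From mathcomp Require Import all_boot all_order all_algebra zify.
Import Order.TTheory GRing.Theory Num.Theory.
Set Implicit Arguments. Unset Strict Implicit.


Section Cyc.
Variable V : finType.
Implicit Types (p q : seq V) (x y : V).

Lemma next_idx p x : uniq p -> x \in p ->
  index (next p x) p = (index x p).+1 %% size p.
Proof.
move=> Up xp; rewrite next_nth xp.
case: p Up xp => [|y q] // Up xp.
have : index x (y :: q) <= size q by rewrite -ltnS index_mem.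
rewrite leq_eqVlt => /orP[/eqP E|lt].
  by rewrite E nth_default // modnn /= eqxx.
rewrite modn_small ?ltnS //.
have -> : nth y q (index x (y :: q)) = nth y (y :: q) (index x (y :: q)).+1 by [].
by rewrite index_uniq.
Qed.

Lemma idx_inj p x y : x \in p -> y \in p -> index x p = index y p -> x = y.
Proof. by move=> xp yp E; rewrite -(nth_index x xp) -(nth_index x yp) E. Qed.

Lemma next_neq p x : uniq p -> x \in p -> 2 <= size p -> next p x != x.
Proof.
move=> Up xp s2; apply/eqP=> E.
have := next_idx Up xp; rewrite E.
have lt : index x p < size p by rewrite index_mem.
case: (ltngtP (index x p).+1 (size p)) => h.
- by rewrite modn_small // => /n_Sn.
- by move: h; rewrite ltnS leqNgt lt.
- by rewrite h modnn => h0; move: h; rewrite h0; case: (size p) s2 => [|[]].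
Qed.

Lemma next2_neq p x : uniq p -> x \in p -> 3 <= size p -> next p (next p x) != x.
Proof.
move=> Up xp s3; apply/eqP=> E.
have xp' : next p x \in p by rewrite mem_next.
have := next_idx Up xp'; rewrite E (next_idx Up xp).
have lt : index x p < size p by rewrite index_mem.
set i := index x p; set n := size p.
case: (ltngtP i.+1 n) => h.
- case: (ltngtP i.+2 n) => h2.
  + by rewrite (modn_small h) (modn_small h2) => /eqP; lia.
  + lia.
  + by rewrite (modn_small h) h2 modnn => E0; lia.
- lia.
- by rewrite h modnn modn_small; lia.
Qed.

Lemma iter_idx p x m : uniq p -> x \in p ->
  iter m (next p) x \in p /\ index (iter m (next p) x) p = (index x p + m) %% size p.
Proof.
move=> Up xp; elim: m => [|m [IH1 IH2]] /=.
  by rewrite addn0 modn_small // index_mem.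
rewrite mem_next IH1; split=> //.
by rewrite next_idx // IH2 -addn1 modnDml addn1 addnS.
Qed.

Lemma next_closed p (S : {set V}) x : uniq p -> x \in p -> x \in S ->
  (forall v, v \in S -> next p v \in S) -> forall y, y \in p -> y \in S.
Proof.
move=> Up xp xS cl y yp.
have Hi : forall m, iter m (next p) x \in S.
  by elim=> //= m IH; apply: cl.
have ltx := xp; rewrite -index_mem in ltx.
have lty := yp; rewrite -index_mem in lty.
have [m1 m2] := iter_idx (index y p + size p - index x p) Up xp.
suff -> : y = iter (index y p + size p - index x p) (next p) x by [].
apply: (idx_inj yp m1); rewrite m2.
rewrite subnKC; last by rewrite (leq_trans (ltnW ltx)) ?leq_addl.
by rewrite modnDr modn_small.
Qed.

End Cyc.


Section Ham.
Variable V : finType.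

Lemma set2_eq (a b c d : V) : [set a; b] = [set c; d] -> (a = c /\ b = d) \/ (a = d /\ b = c).
Proof.
move=> E.
have : a \in [set c; d] by rewrite -E set21.
have : b \in [set c; d] by rewrite -E set22.
have : c \in [set a; b] by rewrite E set21.
have : d \in [set a; b] by rewrite E set22.
move=> /set2P hd /set2P hc /set2P hb /set2P ha.
by case: ha => ?; case: hb => ?; case: hc => ?; case: hd => ?; subst; auto.
Qed.

Variable s : seq V.
Hypotheses (Us : uniq s) (Ts : forall v, v \in s) (n3 : 3 <= #|V|).

Lemma size_s : size s = #|V|.
Proof.
rewrite -(card_uniqP Us); apply: eq_card => v; by rewrite Ts.
Qed.

Let s3 : 3 <= size s. Proof. by rewrite size_s. Qed.
Let s2 : 2 <= size s. Proof. exact: ltnW. Qed.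

Definition hamC := [set [set v; next s v] | v : V].

Lemma hamC_e2 e : e \in hamC -> #|e| = 2.
Proof. by case/imsetP=> v _ ->; rewrite cards2 eq_sym (next_neq Us (Ts v) s2). Qed.

Lemma hamC_inj : injective (fun v => [set v; next s v]).
Proof.
move=> u v /set2_eq [[]//|[E1 E2]].
have : next s (next s u) != u by apply: next2_neq.

by rewrite E2 -E1 eqxx.
Qed.

Lemma hamC_card : #|hamC| = #|V|.
Proof. by rewrite card_imset //; apply: hamC_inj. Qed.

Lemma hamC_deg v : #|[set e in hamC | v \in e]| = 2.
Proof.
have -> : [set e in hamC | v \in e] = [set [set v; next s v]; [set prev s v; v]].
  apply/setP=> e; rewrite !inE; apply/andP/orP.
    case=> /imsetP[u _ ->] /set2P[]->; first by left.
    by right; rewrite prev_next.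
  case=> /eqP->; split; rewrite ?set21 ?set22 //.
    by apply/imsetP; exists v.
  by apply/imsetP; exists (prev s v) => //; rewrite next_prev.
rewrite cards2; suff -> : ([set v; next s v] != [set prev s v; v]) by []. apply/eqP=> E.
have : next s v \in [set prev s v; v] by rewrite -E set22.
case/set2P=> E2.
  have : next s (next s v) != v by apply: next2_neq.
  by rewrite E2 (next_prev Us) eqxx.
have : next s v != v by apply: next_neq.
by rewrite E2 eqxx.
Qed.

Lemma hamC_sub (S : {set V}) : S \proper [set: V] -> 0 < #|S| ->
  #|[set e in hamC | e \subset S]| <= #|S| - 1.
Proof.
move=> PS /card_gt0P[x xS].
set A := [set v in S | next s v \in S].
have sub1 : [set e in hamC | e \subset S] \subset [set [set v; next s v] | v in A].
  apply/subsetP=> e; rewrite inE => /andP[/imsetP[v _ ->] sS].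
  apply/imsetP; exists v => //; rewrite inE.
  by rewrite (subsetP sS) ?set21 ?(subsetP sS) ?set22.
apply: leq_trans (subset_leq_card sub1) _.
apply: leq_trans (leq_imset_card _ _) _.
have : A \proper S.
  rewrite properE; apply/andP; split.
    by apply/subsetP=> v; rewrite inE => /andP[].
  apply/negP=> SA.
  have : S = [set: V].
    apply/setP=> y; rewrite inE; apply: (next_closed Us (Ts x) xS) => //.
    by move=> v vS; have := subsetP SA v vS; rewrite inE => /andP[].
  by move=> ES; move: PS; rewrite ES properE subxx.
move/proper_card; lia.
Qed.

End Ham.


Section Build.
Variable V : finType.
Variable Z : {set {set V}}.
Hypotheses (n3 : 3 <= #|V|) (Z2 : forall e, e \in Z -> #|e| = 2)
  (Zc : #|Z| = #|V|) (Zd : forall v, #|[set e in Z | v \in e]| = 2)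
  (Zs : forall S : {set V}, S \proper [set: V] -> 2 <= #|S| ->
          #|[set e in Z | e \subset S]| <= #|S| - 1).

Definition R (a b : V) := [set a; b] \in Z.
Definition f2 (a b : V) := [set a; b].

Lemma PL1 x q g : g \in pairmap f2 x q -> g \subset [set v in x :: q].
Proof.
elim: q x => [|y q IH] x //=; rewrite inE => /orP[/eqP->|/IH sub].
  by apply/subsetP=> v /set2P[]->; rewrite !inE eqxx ?orbT.
by apply: subset_trans sub _; apply/subsetP=> v; rewrite !inE => ->; rewrite orbT.
Qed.

Lemma PL2 x q : uniq (x :: q) -> uniq (pairmap f2 x q).
Proof.
elim: q x => [|y q IH] x //= /andP[xq /andP[yq Uq]].
rewrite IH /= ?yq ?Uq // andbT; apply/negP=> /PL1 /subsetP /(_ x (set21 _ _)).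
by rewrite inE (negPf xq).
Qed.

Lemma PL3 x q g : uniq (x :: q) -> g \in pairmap f2 x q -> x \in g -> g = [set x; head x q].
Proof.
case: q => [|y q] //= /andP[xq _]; rewrite inE => /orP[/eqP->//|/PL1 /subsetP sub] /sub.
by rewrite inE (negPf xq).
Qed.

Lemma PL4 x q g : path R x q -> g \in pairmap f2 x q -> g \in Z.
Proof.
elim: q x => [|y q IH] x //= /andP[Rxy pq]; rewrite inE => /orP[/eqP->//|].
exact: IH.
Qed.

Lemma PL5 x q : uniq (x :: q) -> q != [::] ->
  count (fun g : {set V} => last x q \in g) (pairmap f2 x q) = 1.
Proof.
elim: q x => [|y q IH] x // Uq _.
case: q IH Uq => [|z q] IH Uq.
  by rewrite /= set22.
move: Uq; rewrite [uniq _]/= => /andP[xq Uq].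
rewrite [pairmap _ _ _]/= [count _ _]/=.
have := IH y Uq isT => /= ->.
have lq : last z q \in z :: q by apply: mem_last.
suff -> : (last z q \in f2 x y) = false by [].
apply/negP=> /set2P[] E.
  by move: xq; rewrite -E inE lq orbT.
by move: Uq => /andP[]; rewrite -E lq.
Qed.

Lemma step x q : uniq (x :: q) -> path R x q ->
  (exists u, u \notin x :: q /\ R u x) \/ is_ham_cycle Z.
Proof.
move=> Up Pp.
set D := [set e in Z | x \in e].
have [e eD ne] : exists2 e, e \in D & e != [set x; head x q].
  case: (pickP [pred e in D | e != [set x; head x q]]) => [e /andP[]|none].
    by move=> *; exists e.
  have : D \subset [set [set x; head x q]].
    apply/subsetP=> g gD; rewrite inE; have := none g; rewrite /= gD /=.
    by move/negbFE.
  by move/subset_leq_card; rewrite cards1 Zd.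
move: eD; rewrite inE => /andP[eZ xe].
have : #|e :\ x| = 1 by have := cardsD1 x e; rewrite xe Z2 //; case.
move=> /eqP/cards1P[u eu].
have ux : u != x.
  have : u \in e :\ x by rewrite eu set11.
  by rewrite !inE => /andP[].
have ee : e = [set x; u] by rewrite -eu setD1K.
have Rux : R u x by rewrite /R setUC -ee.
case: (boolP (u \in x :: q)) => uin; last by left; exists u.
right.
have uq : u \in q by move: uin; rewrite inE (negPf ux).
have qn : q != [::] by case: q uq {Up Pp ne uin}.
set L := pairmap f2 x q.
have eL : e \notin L.
  by apply/negP=> /(PL3 Up) /(_ xe) E; rewrite E eqxx in ne.
have UL : uniq (e :: L) by rewrite /= eL PL2.
set S := [set v in x :: q].
have cS : #|S| = (size q).+1 by rewrite cardsE (card_uniqP Up).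
have sub : [set g in e :: L] \subset [set g in Z | g \subset S].
  apply/subsetP=> g; rewrite !inE => /orP[/eqP->|gL].
    rewrite eZ /=; apply/subsetP=> v; rewrite ee => /set2P[]->; rewrite inE //.
    by rewrite inE eqxx.
  by rewrite (PL4 Pp gL) (PL1 gL).
have cL : #|[set g in e :: L]| = (size q).+1.
  by rewrite cardsE (card_uniqP UL) /= size_pairmap.
have ST : S = [set: V].
  apply/eqP; apply/negP=> /negP nT.
  have PS : S \proper [set: V] by rewrite properT.
  have S2 : 2 <= #|S| by rewrite cS ltnS lt0n size_eq0.
  have := Zs PS S2; have := subset_leq_card sub; rewrite cL cS subSS subn0 => h1 h2.
  by rewrite ltnNge h2 in h1.
have Tp : forall v, v \in x :: q.
  move=> v; have : v \in S by rewrite ST inE.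
  by rewrite /S !inE.
have sp : size (x :: q) = #|V| by apply: size_s.
have ZL : Z = [set g in e :: L].
  apply/eqP; rewrite eq_sym eqEcard.
  have -> : [set g in e :: L] \subset Z.
    by apply: subset_trans sub _; apply/subsetP=> g; rewrite inE => /andP[].
  by rewrite Zc cL -sp /= leqnn.
set xk := last x q.
have xkq : xk \in q.
  rewrite /xk; case: q qn {Up Pp ne uin uq L eL UL S cS sub cL ST Tp sp ZL xk} => // y q _.
  exact: (mem_last y q).
have xke : xk \in e.
  have := Zd xk.
  have -> : [set g in Z | xk \in g] = [set g in filter (fun g : {set V} => xk \in g) (e :: L)].
    by apply/setP=> g; rewrite ZL !inE mem_filter andbC.
  rewrite cardsE (card_uniqP (filter_uniq _ UL)) size_filter /= PL5 //.
  by case: (xk \in e).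
have xku : xk = u.
  move: xke; rewrite ee => /set2P[] // E.
  by move: Up; rewrite /= -E xkq.
have Cp : cycle R (x :: q).
  by rewrite /= rcons_path Pp -/xk xku.
exists (x :: q); split=> //.
apply/eqP; rewrite eq_sym eqEcard; apply/andP; split.
  apply/subsetP=> g /imsetP[v _ ->].
  exact: (next_cycle Cp (Tp v)).
have := hamC_card Up Tp n3; rewrite /hamC => ->.
by rewrite Zc.
Qed.

Lemma build : is_ham_cycle Z.
Proof.
have /card_gt0P[x0 _] : 0 < #|V| by apply: leq_trans n3.
suff : forall d x q, #|V| - size q = d -> uniq (x :: q) -> path R x q -> is_ham_cycle Z.
  by move/(_ _ x0 [::] erefl); apply.
elim=> [|d IH] x q Hd Up Pp; case: (step Up Pp) => // [[u [un Ru]]].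
- have : uniq (u :: x :: q) by rewrite /= un.
  move/card_uniqP; move: (max_card (mem (u :: x :: q))) => h E; rewrite E /= in h.
  have h2 : #|V| <= size q by rewrite -subn_eq0 Hd.
  by rewrite ltnNge (leq_trans h2 (leqnSn _)) in h.
- apply: (IH u (x :: q)) => //=; first by rewrite subnS Hd.
  by move: Up => /= ->; rewrite un.
  by rewrite Ru Pp.
Qed.

End Build.


Section HF.
Variable V : finType.
Hypothesis n3 : 3 <= #|V|.

Lemma ham_facts (H : {set {set V}}) : is_ham_cycle H ->
  [/\ (forall e, e \in H -> #|e| = 2), #|H| = #|V|,
      (forall v, #|[set e in H | v \in e]| = 2) &
      (forall S : {set V}, S \proper [set: V] -> 0 < #|S| ->
          #|[set e in H | e \subset S]| <= #|S| - 1)].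
Proof.
case=> s [Us Ts ->]; split.
- exact: (hamC_e2 Us Ts n3).
- exact: (hamC_card Us Ts n3).
- exact: (hamC_deg Us Ts n3).
- exact: (hamC_sub Us Ts n3).
Qed.

Lemma card_set1_pred (T : finType) (a : T) (P : pred T) :
  #|[set g in [set a] | P g]| = P a.
Proof.
case h: (P a).
  have -> : [set g in [set a] | P g] = [set a].
    by apply/setP=> g; rewrite !inE; case: eqP => // ->.
  by rewrite cards1.
have -> : [set g in [set a] | P g] = set0.
  by apply/setP=> g; rewrite !inE; case: eqP => // ->; rewrite h.
by rewrite cards0.
Qed.

Lemma deg_split (H K : {set {set V}}) v :
  #|[set g in H | v \in g]| = #|[set g in H :&: K | v \in g]| + #|[set g in H :\: K | v \in g]|.
Proof.
rewrite -(cardsID K [set g in H | v \in g]); f_equal; apply: eq_card => g;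
  by rewrite !inE; case: (g \in K); case: (g \in H); case: (v \in g).
Qed.

Lemma DL (H1 H2 : {set {set V}}) : is_ham_cycle H1 -> is_ham_cycle H2 ->
  #|H1 :\: H2| <= 1 -> H1 = H2.
Proof.
move=> h1 h2 c.
have [e1 c1 d1 _] := ham_facts h1.
have [e2 c2 d2 _] := ham_facts h2.
have [E0|E1] : #|H1 :\: H2| = 0 \/ #|H1 :\: H2| = 1 by case: (#|H1 :\: H2|) c => [|[]]; auto.
  have sub : H1 \subset H2 by rewrite -setD_eq0 -cards_eq0 E0.
  by apply/eqP; rewrite eqEcard sub c1 c2 leqnn.
have E2 : #|H2 :\: H1| = 1.
  by move: E1; rewrite !cardsD c1 c2 setIC.
move: E1 E2 => /eqP/cards1P[f Ef] /eqP/cards1P[e Ee].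
have : f \in H1 :\: H2 by rewrite Ef set11.
rewrite inE => /andP[fH2 fH1].
have : e \in H2 :\: H1 by rewrite Ee set11.
rewrite inE => /andP[eH1 eH2].
have ef : e \subset f.
  apply/subsetP=> v ve.
  have := d1 v; rewrite (deg_split H1 H2) Ef card_set1_pred.
  have := d2 v; rewrite (deg_split H2 H1) Ee card_set1_pred setIC ve.
  by case: (v \in f) => //= k1 k2; move: k1; rewrite -{}k2 addn0 addn1; lia.
have : e = f by apply/eqP; rewrite eqEcard ef e1 // e2.
by move=> E; move: eH2; rewrite E (negPf fH2).
Qed.

End HF.


Section Main.
Variable V : finType.
Variables (Ex Ey : {set {set V}}) (X : copy V -> int).
Hypotheses (n3 : 3 <= #|V|) (hx : is_ham_cycle Ex) (hy : is_ham_cycle Ey)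
  (X01 : forall e, e \in copies Ex Ey -> X e = 0 \/ X e = 1).

Definition Hb (b : bool) := if b then Ex else Ey.

Lemma hamHb b : is_ham_cycle (Hb b). Proof. by case: b. Qed.

Lemma inE_copies (p : copy V) : (p \in copies Ex Ey) = (p.2 \in Hb p.1).
Proof. by rewrite inE. Qed.

Lemma E2 p : p \in copies Ex Ey -> #|p.2| = 2.
Proof.
rewrite inE_copies => h.
by have [e2 _ _ _] := ham_facts n3 (hamHb p.1); apply: e2.
Qed.

Lemma card_split (T : finType) (A : {set T}) (Q : pred T) :
  #|[set p in A | Q p]| + #|[set p in A | ~~ Q p]| = #|A|.
Proof.
rewrite -(cardsID [set p | Q p] A); f_equal; apply: eq_card => p;
  by rewrite !inE andbC.
Qed.

Lemma F_split (P : pred {set V}) :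
  #|[set p in copies Ex Ey | P p.2]| = #|[set f in Ex | P f]| + #|[set f in Ey | P f]|.
Proof.
rewrite -(card_split _ (fun p : copy V => p.1)).
have injb b : injective (pair b : {set V} -> copy V) by move=> u v [].
f_equal.
  rewrite -(card_imset _ (injb true)); apply: eq_card => p.
  case: p => [[] f]; rewrite !inE /=.
    apply/idP/imsetP => [h|[g hg [->]]]; last by move: hg; rewrite inE andbT.
    by exists f => //; rewrite inE; move: h; rewrite andbT.
  by rewrite andbF; apply/esym/negP=> /imsetP[g _ []].
rewrite -(card_imset _ (injb false)); apply: eq_card => p.
case: p => [[] f]; rewrite !inE /=.
  by rewrite andbF; apply/esym/negP=> /imsetP[g _ []].
apply/idP/imsetP => [h|[g hg [->]]]; last by move: hg; rewrite inE andbT.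
by exists f => //; rewrite inE; move: h; rewrite andbT.
Qed.

Definition zs := [set e in copies Ex Ey | X e == 1].
Definition ws := [set e in copies Ex Ey | X e == 0].

Local Open Scope ring_scope.
Lemma F_sum (Q : pred (copy V)) :
  \sum_(p in [set p in copies Ex Ey | Q p]) X p = #|[set p in zs | Q p]|%:Z.
Proof.
rewrite (bigID (fun p => X p == 1)) /= [X in _ + X]big1; last first.
  by move=> p /andP[]; rewrite inE => /andP[/X01[]->].
rewrite addr0 (eq_bigr (fun _ => 1)); last by move=> p /andP[_ /eqP].
rewrite -big_set /= sumr_const natz; congr Posz.
by apply: eq_card => p; rewrite !inE andbAC.
Qed.


Lemma F_zw (Q : pred (copy V)) :
  (#|[set p in zs | Q p]| + #|[set p in ws | Q p]|)%N = #|[set p in copies Ex Ey | Q p]|.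
Proof.
rewrite -(card_split [set p in copies Ex Ey | Q p] (fun p => X p == 1)).
f_equal; apply: eq_card => p; rewrite !inE.
  by rewrite andbAC.
have := @X01 p; rewrite inE.
case: (p.2 \in _) => //= /(_ isT)[]->; by rewrite andbC.
Qed.

Lemma F_und (z0 : {set copy V}) (Q : pred {set V}) : {in z0 &, injective snd} ->
  #|[set f in underlying z0 | Q f]| = #|[set p in z0 | Q p.2]|.
Proof.
move=> inj.
have -> : [set f in underlying z0 | Q f] = snd @: [set p in z0 | Q p.2].
  apply/setP=> f; rewrite inE; apply/andP/imsetP => [[/imsetP[p pz ->] h]|[p]].
    by exists p => //; rewrite inE pz.
  by rewrite inE => /andP[pz h] ->; split => //; apply/imsetP; exists p.
rewrite card_in_imset // => p q; rewrite !inE => /andP[pz _] /andP[qz _].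
exact: inj.
Qed.

Lemma hc_of (z0 : {set copy V}) : z0 \subset copies Ex Ey -> {in z0 &, injective snd} ->
  #|z0| = #|V| -> (forall v, #|[set p in z0 | v \in p.2]| = 2) ->
  (forall S : {set V}, S \proper [set: V] -> (2 <= #|S|)%N ->
     (#|[set p in z0 | p.2 \subset S]| <= #|S| - 1)%N) -> ham_copies z0.
Proof.
move=> sub inj c d st; split => //; apply: build => //.
- by move=> e /imsetP[p pz ->]; apply: E2; apply: (subsetP sub).
- by rewrite card_in_imset.
- by move=> v; rewrite (F_und (fun f => v \in f) inj).
- by move=> S PS S2; rewrite (F_und (fun f => f \subset S) inj); apply: st.
Qed.

Lemma ham_of (z0 : {set copy V}) : ham_copies z0 ->
  [/\ #|z0| = #|V|, (forall v, #|[set p in z0 | v \in p.2]| = 2) &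
  (forall S : {set V}, S \proper [set: V] -> (0 < #|S|)%N ->
     (#|[set p in z0 | p.2 \subset S]| <= #|S| - 1)%N)].
Proof.
case=> inj h; have [_ c d st] := ham_facts n3 h; split.
- by rewrite -c card_in_imset.
- by move=> v; rewrite -(F_und (fun f => v \in f) inj).
- by move=> S PS S0; rewrite -(F_und (fun f => f \subset S) inj); apply: st.
Qed.

Lemma Inj (z0 : {set copy V}) : z0 \subset copies Ex Ey ->
  (forall S : {set V}, S \proper [set: V] -> (2 <= #|S|)%N ->
     (#|[set p in z0 | p.2 \subset S]| <= #|S| - 1)%N) -> {in z0 &, injective snd}.
Proof.
move=> sub st p q pz qz epq.
case: (eqVneq p q) => // npq; exfalso.
have pE := subsetP sub p pz.
have c2 := E2 pE.
have PS : p.2 \proper [set: V].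
  rewrite properT; apply/negP=> /eqP ET.
  by move: n3; rewrite -cardsT -ET c2.
have := st _ PS; rewrite c2 => /(_ isT).
have : [set p; q] \subset [set r in z0 | r.2 \subset p.2].
  apply/subsetP=> r /set2P[]->; rewrite inE ?pz ?qz //= -?epq subxx //.
by move/subset_leq_card; rewrite cards2 npq => /leq_trans h /h.
Qed.


Definition Qb (b : bool) (p : copy V) := (p.1 == b) && (p.2 \notin Hb (~~ b)).
Definition cc := #|Ex :&: Ey|.

Lemma cc_b b : #|Hb b :&: Hb (~~ b)| = cc.
Proof. by case: b; rewrite /cc //= setIC. Qed.

Lemma cardH b : #|Hb b| = #|V|.
Proof. by have [] := ham_facts n3 (hamHb b). Qed.

Lemma NB1 b : underlying zs = Hb b ->
  (#|[set p in zs | Qb b p]| + cc)%N = #|V|.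
Proof.
move=> UZ.
have -> : [set p in zs | Qb b p] = pair b @: (Hb b :\: Hb (~~ b)).
  apply/setP=> -[b' f]; rewrite inE; apply/andP/imsetP.
    rewrite /Qb /= => -[] + /andP[/eqP eb fn]; rewrite inE => /andP[fE _].
    exists f; last by rewrite eb.
    by rewrite inE fn /=; move: fE; rewrite inE_copies /= eb.
  case=> g; rewrite inE => /andP[gn gb] [-> ->]; split; last by rewrite /Qb /= eqxx.
  have : g \in underlying zs by rewrite UZ.
  case/imsetP=> r; rewrite inE => /andP[rE rX] gr.
  have : r.2 \in Hb r.1 by move: rE; rewrite inE_copies.
  case: r rE rX gr => [b2 h] rE rX /= gr hb; subst g.
  have eb : b2 = b.
    case: (eqVneq b2 b) => // nb.
    have nbb : b2 = ~~ b by move: nb; case: (b2); case: (b).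
    by move: gn; rewrite -nbb hb.
  by rewrite inE; move: rE rX; rewrite eb => -> ->.
rewrite card_imset; last by move=> u v [].
by rewrite cardsD cc_b cardH subnK // -(cardH b) -(cc_b b) subset_leq_card // subsetIl.
Qed.


Lemma NB2 b : ham_copies zs -> ham_copies ws -> underlying zs <> Hb b ->
  (#|[set p in zs | Qb b p]| + 2 + cc <= #|V|)%N.
Proof.
move=> hz hw nZ.
have [cz _ _] := ham_of hz.
case: hz => injz hZ; case: hw => injw _.
have s1 := card_split zs (fun p => p.2 \in Hb b).
have s2 := card_split [set p in zs | p.2 \in Hb b] (fun p => p.2 \in Hb (~~ b)).
have e1 : #|[set p in [set p in zs | p.2 \in Hb b] | p.2 \in Hb (~~ b)]| =
          #|[set p in zs | p.2 \in Hb b :&: Hb (~~ b)]|.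
  by apply: eq_card => p; rewrite !inE andbA.
have e2 : #|[set p in [set p in zs | p.2 \in Hb b] | p.2 \notin Hb (~~ b)]| =
          #|[set p in zs | Qb b p]|.
  apply: eq_card => -[b' f]; rewrite !inE /Qb /Hb /=.
  by case: (b); case: b'; case: (f \in Ex); case: (f \in Ey); case: (X _ == 1).
have e3 : #|[set p in zs | p.2 \in Hb b :&: Hb (~~ b)]| = cc.
  rewrite -(F_und (fun f => f \in Hb b :&: Hb (~~ b)) injz) -(cc_b b).
  apply: eq_card => f; rewrite inE andb_idl // => fc.
  have fx : f \in Ex by move: fc; case: (b); rewrite !inE => /andP[].
  have fy : f \in Ey by move: fc; case: (b); rewrite !inE => /andP[].
  have tE : (true, f) \in copies Ex Ey by rewrite inE.
  have fE : (false, f) \in copies Ex Ey by rewrite inE.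
  have inz p : p \in zs -> p.2 \in underlying zs by move=> pz; apply/imsetP; exists p.
  case: (X01 tE) => Xt; last by apply: (inz (true, f)); rewrite inE tE Xt.
  case: (X01 fE) => Xf; last by apply: (inz (false, f)); rewrite inE fE Xf.
  have : (true, f) = (false, f) by apply: injw => //; rewrite inE ?tE ?fE ?Xt ?Xf.
  by [].
have e4 : #|[set p in zs | p.2 \notin Hb b]| = #|underlying zs :\: Hb b|.
  rewrite -(F_und (fun f => f \notin Hb b) injz).
  by apply: eq_card => f; rewrite !inE andbC.
have d2 : (2 <= #|underlying zs :\: Hb b|)%N.
  rewrite ltnNge; apply/negP=> h; apply: nZ; exact: (DL n3 hZ (hamHb b) h).
move: s1 s2 e1 e2 e3 e4 d2 cz.
rewrite -(cc_b b).
move: (#|[set p in zs | Qb b p]|) => a.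
move: (#|[set p in zs | p.2 \in Hb b :&: Hb (~~ b)]|) => k.
move: (#|_ :&: _|) => cc'.
move=> s1 s2 e1 e2 e3 e4 d2 cz. lia.
Qed.


Lemma setT_in (T : finType) (A : {set T}) : [set p in A | true] = A.
Proof. by apply/setP=> p; rewrite inE andbT. Qed.

Lemma sum_all : \sum_(e in copies Ex Ey) X e = #|zs|%:Z.
Proof.
by have := F_sum (fun _ => true); rewrite !setT_in.
Qed.

Lemma sum_x : \sum_(e in copies_x_only Ex Ey) X e = #|[set p in zs | Qb true p]|%:Z.
Proof.
rewrite /copies_x_only (F_sum (fun p => p.1 && (p.2 \notin Ey))); congr Posz.
by apply: eq_card => -[[] f]; rewrite !inE /Qb.
Qed.

Lemma sum_y : \sum_(e in copies_y_only Ex Ey) X e = #|[set p in zs | Qb false p]|%:Z.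
Proof.
rewrite /copies_y_only (F_sum (fun p => ~~ p.1 && (p.2 \notin Ex))); congr Posz.
by apply: eq_card => -[[] f]; rewrite !inE /Qb.
Qed.

Lemma zs_sub : zs \subset copies Ex Ey.
Proof. by apply/subsetP=> p; rewrite inE => /andP[]. Qed.
Lemma ws_sub : ws \subset copies Ex Ey.
Proof. by apply/subsetP=> p; rewrite inE => /andP[]. Qed.

Lemma degH v : #|[set p in copies Ex Ey | v \in p.2]| = 4%N.
Proof.
rewrite (F_split (fun f => v \in f)).
have [_ _ dx _] := ham_facts n3 hx; have [_ _ dy _] := ham_facts n3 hy.
by rewrite dx dy.
Qed.

Lemma cardE : #|copies Ex Ey| = (#|V| + #|V|)%N.
Proof.
have := F_split (fun _ => true); rewrite !setT_in => ->.
by rewrite (cardH true) (cardH false).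
Qed.

Lemma main_sec :
  let E := copies Ex Ey in
  let n := #|V| in
  let c := #|Ex :&: Ey| in
  ( \sum_(e in E) X e = n%:Z /\
        (forall v : V, \sum_(e in copies_at Ex Ey v) X e = 2) /\
        \sum_(e in copies_x_only Ex Ey) X e <= n%:Z - c%:Z - 2 /\
        \sum_(e in copies_y_only Ex Ey) X e <= n%:Z - c%:Z - 2 /\
        (forall S : {set V}, S \proper [set: V] -> (2 <= #|S|)%N ->
                     \sum_(e in copies_in Ex Ey S) X e <= #|S|%:Z - 1) /\
        (forall S : {set V}, S \proper [set: V] -> (2 <= #|S|)%N ->
                     \sum_(e in copies_in Ex Ey S) X e
                       >= #|copies_in Ex Ey S|%:Z - #|S|%:Z + 1) /\
      (forall e, e \in E -> X e = 0 \/ X e = 1) )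
  <->
    let z := [set e in E | X e == 1] in
    let w := [set e in E | X e == 0] in
    [/\ ham_copies z, ham_copies w, underlying z <> Ex & underlying z <> Ey].
Proof.
move=> E n c; rewrite {}/E {}/n {}/c; split.
- move=> [h1 [h2 [h3 [h4 [h5 [h6 _]]]]]].
  have wz Q : #|[set p in ws | Q p]| = (#|[set p in copies Ex Ey | Q p]| - #|[set p in zs | Q p]|)%N.
    by rewrite -(F_zw Q) addKn.
  have cz : #|zs| = #|V|.
    by move: h1; rewrite sum_all => -[].
  have zdeg v : #|[set p in zs | v \in p.2]| = 2%N.
    by move: (h2 v); rewrite /copies_at F_sum => -[].
  have zsub (S : {set V}) : S \proper [set: V] -> (2 <= #|S|)%N ->
      (#|[set p in zs | p.2 \subset S]| <= #|S| - 1)%N.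
    move=> PS S2; move: (h5 S PS S2); rewrite /copies_in F_sum.
    move: (#|[set p in zs | _]|) (#|S|) S2 => a k S2; lia.
  have cw : #|ws| = #|V|.
    have := wz (fun _ => true); rewrite !setT_in cardE cz => ->; lia.
  have wdeg v : #|[set p in ws | v \in p.2]| = 2%N.
    by rewrite wz degH zdeg.
  have wsub (S : {set V}) : S \proper [set: V] -> (2 <= #|S|)%N ->
      (#|[set p in ws | p.2 \subset S]| <= #|S| - 1)%N.
    move=> PS S2; move: (h6 S PS S2); rewrite /copies_in F_sum wz.
    move: (#|[set p in zs | _]|) (#|[set p in copies Ex Ey | _]|) (#|S|) S2 => a k m S2; lia.
  have hz : ham_copies zs by apply: hc_of => //; [exact: zs_sub | exact: Inj zs_sub zsub].
  have hw : ham_copies ws by apply: hc_of => //; [exact: ws_sub | exact: Inj ws_sub wsub].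
  split => // UZ.
  + have := NB1 (b := true) UZ; move: h3; rewrite sum_x -/cc.
    move: (#|[set p in zs | _]|) (cc) => a k; lia.
  + have := NB1 (b := false) UZ; move: h4; rewrite sum_y -/cc.
    move: (#|[set p in zs | _]|) (cc) => a k; lia.
- move=> H.
  have {H} [hz hw nx ny] : [/\ ham_copies zs, ham_copies ws, underlying zs <> Ex & underlying zs <> Ey] := H.
  have [cz zdeg zsub] := ham_of hz.
  have [cw wdeg wsub] := ham_of hw.
  split; first by rewrite sum_all cz.
  split; first by move=> v; rewrite /copies_at F_sum zdeg.
  split.
    have := NB2 (b := true) hz hw nx; rewrite sum_x -/cc.
    move: (#|[set p in zs | _]|) (cc) => a k; lia.
  split.
    have := NB2 (b := false) hz hw ny; rewrite sum_y -/cc.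
    move: (#|[set p in zs | _]|) (cc) => a k; lia.
  split.
    move=> S PS S2; rewrite /copies_in F_sum.
    have := zsub S PS (ltnW S2).
    move: (#|[set p in zs | _]|) (#|S|) S2 => a k S2; lia.
  split; last exact: X01.
  move=> S PS S2; rewrite /copies_in F_sum.
  have := wsub S PS (ltnW S2); have := F_zw (fun p => p.2 \subset S).
  move: (#|[set p in zs | _]|) (#|[set p in ws | _]|) (#|[set p in copies Ex Ey | _]|) (#|S|) S2.
  move=> a b k m S2; lia.
Qed.

End Main.

Unset Implicit Arguments.
Local Open Scope ring_scope.
Theorem mainTheorem1 (V : finType) (Ex Ey : {set {set V}})
    (X : copy V -> int) :
  (3 <= #|V|)%N ->
  is_ham_cycle Ex -> is_ham_cycle Ey ->
  (forall e, e \in copies Ex Ey -> X e = 0 \/ X e = 1) ->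
  let E := copies Ex Ey in
  let n := #|V| in
  let c := #|Ex :&: Ey| in
  ( (* (1) *) \sum_(e in E) X e = n%:Z /\
        (* (2) *) (forall v : V, \sum_(e in copies_at Ex Ey v) X e = 2) /\
        (* (3) *) \sum_(e in copies_x_only Ex Ey) X e <= n%:Z - c%:Z - 2 /\
        (* (4) *) \sum_(e in copies_y_only Ex Ey) X e <= n%:Z - c%:Z - 2 /\
        (* (5) *) (forall S : {set V}, S \proper [set: V] -> (2 <= #|S|)%N ->
                     \sum_(e in copies_in Ex Ey S) X e <= #|S|%:Z - 1) /\
        (* (6) *) (forall S : {set V}, S \proper [set: V] -> (2 <= #|S|)%N ->
                     \sum_(e in copies_in Ex Ey S) X e
                       >= #|copies_in Ex Ey S|%:Z - #|S|%:Z + 1) /\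
      (* (7) *) (forall e, e \in E -> X e = 0 \/ X e = 1) )
  <->
    let z := [set e in E | X e == 1] in
    let w := [set e in E | X e == 0] in
    [/\ ham_copies z, ham_copies w, underlying z <> Ex & underlying z <> Ey].
Proof.
move=> n3 hx hy X01; exact: (@main_sec V Ex Ey X n3 hx hy X01).
Qed.
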